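(* Let $\mathcal{X}$ be a real Hilbert space, let $d_1,d_2,d_3:\mathcal{X}\to(-\infty,+\infty]$ be proper closed convex functions and $\gamma>0$. Let $z^0\in\mathcal{X}$ and for $k=0,1,\dots$ define $w^k_{d_3}=\operatorname{prox}^\gamma_{d_3}(z^k)$; choose $\nabla d_2(w^k_{d_3})\in\partial d_2(w^k_{d_3})$; $w^k_{d_1}=\operatorname{prox}^\gamma_{d_1}\big(2w^k_{d_3}-z^k-\gamma\nabla d_2(w^k_{d_3})\big)$; $w^k_{d_2}=\operatorname{prox}^\gamma_{d_2}\big(w^k_{d_1}+\gamma\nabla d_2(w^k_{d_3})\big)$; $z^{k+1}=z^k+w^k_{d_2}-w^k_{d_3}$, and set $\nabla d_2(w^k_{d_2}):=\gamma^{-1}(w^k_{d_1}+\gamma\nabla d_2(w^k_{d_3})-w^k_{d_2})\in\partial d_2(w^k_{d_2})$. Let $w^*$ be a fixed point of this iteration (i.e. of the map $z^k\mapsto z^{k+1}$). Then for every $k\ge0$, $$\begin{aligned} &2\gamma\big(d_1(w^k_{d_1})+d_2(w^k_{d_3})+d_3(w^k_{d_3})-(d_1+d_2+d_3)(w^* )\big)\\ &\le \|z^k-w^*\|^2-\|z^k-z^{k+1}\|^2-\|z^{k+1}-w^*\|^2+2\gamma\langle\nabla d_2(w^k_{d_3})-\nabla d_2(w^k_{d_2}),z^k-w^*\rangle\\ &\quad-2\gamma\langle\nabla d_2(w^k_{d_3})-\nabla d_2(w^k_{d_2}),z^k-z^{k+1}\rangle+2\gamma\langle z^k-z^{k+1},\nabla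 d_2(w^k_{d_2})\rangle\\ &\quad+2\gamma^2\langle\nabla d_2(w^k_{d_3})-\nabla d_2(w^k_{d_2}),\nabla d_2(w^k_{d_2})\rangle. \end{aligned}$$
   Context: $\operatorname{prox}^\gamma_f(x)=\arg\min_{y}\big(f(y)+\frac{1}{2\gamma}\|y-x\|^2\big)$; one has $\tilde w=\operatorname{prox}^\gamma_f(w)$ iff $\gamma^{-1}(w-\tilde w)\in\partial f(\tilde w)$. The symbol $\nabla d_2(\cdot)$ denotes the specific subgradients indicated (gradients if $d_2$ is differentiable). *)

(* Defs.v *)
From HB Require Import structures.
From mathcomp Require Import all_boot all_order all_algebra.
From mathcomp Require Import all_classical all_reals all_analysis.
Set Implicit Arguments. Unset Strict Implicit. Unset Printing Implicit Defensive.
Import Order.TTheory GRing.Theory Num.Theory.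
Import numFieldNormedType.Exports.
Local Open Scope classical_set_scope.
Local Open Scope ring_scope.

Section Defs.
Variables (R : realType) (V : completeNormedModType R).

(* ip is an inner product on V inducing its norm (so V is a real Hilbert space). *)
Definition is_inner_product (ip : V -> V -> R) : Prop :=
  (forall x y, ip x y = ip y x) /\
  (forall (a : R) x y z, ip (a *: x + y) z = a * ip x z + ip y z) /\
  (forall x, ip x x = `|x| ^+ 2).

Definition proper_fun (f : V -> \bar R) : Prop :=
  (exists x, (f x < +oo)%E) /\ (forall x, (-oo < f x)%E).

Definition closed_fun (f : V -> \bar R) : Prop :=
  closed [set p : V * R | (f p.1 <= p.2%:E)%E].

Definition convex_efun (f : V -> \bar R) : Prop :=
  forall x y : V, forall t : R, 0 <= t <= 1 ->
    (f ((t *: x + (1 - t) *: y)%R) <= t%:E * f x + (1 - t)%:E * f y)%E.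

Definition subgrad (ip : V -> V -> R) (f : V -> \bar R) (x g : V) : Prop :=
  forall y, (f x + (ip g (y - x))%:E <= f y)%E.

Definition is_prox (f : V -> \bar R) (gamma : R) (x p : V) : Prop :=
  forall y, (f p + ((2 * gamma)^-1 * `|p - x| ^+ 2)%:E
             <= f y + ((2 * gamma)^-1 * `|y - x| ^+ 2)%:E)%E.

Definition DY_step (ip : V -> V -> R) (d1 d2 d3 : V -> \bar R) (gamma : R)
  (z w3 g3 w1 w2 z' : V) : Prop :=
  [/\ is_prox d3 gamma z w3,
      subgrad ip d2 w3 g3,
      is_prox d1 gamma (2 *: w3 - z - gamma *: g3) w1,
      is_prox d2 gamma (w1 + gamma *: g3) w2
    & z' = z + w2 - w3].

Definition DY_fixed_point (ip : V -> V -> R) (d1 d2 d3 : V -> \bar R) (gamma : R)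
  (w : V) : Prop :=
  exists w3 g3 w1 w2, DY_step ip d1 d2 d3 gamma w w3 g3 w1 w2 w.

End Defs.

(* Main.v *)
Require Import Defs.
From HB Require Import structures.
From mathcomp Require Import all_boot all_order all_algebra.
From mathcomp Require Import all_classical all_reals all_analysis.
Import Order.TTheory GRing.Theory Num.Theory.
Import numFieldNormedType.Exports.
Local Open Scope ring_scope.
From mathcomp Require Import lra ring.

Lemma key (R : realFieldType) (a b m K : R) : 0 <= K ->
  (forall t, 0 < t <= 1 -> t * a <= t * b + t * m + t ^+ 2 * K) -> a <= b + m.
Proof.
move=> K0 h; rewrite leNgt; apply/negP => H.
set d := a - b - m.
have d0 : 0 < d by rewrite /d; lra.
have dK : 0 < d + K by lra.
set t := d / (d + K).
have t0 : 0 < t by rewrite /t divr_gt0.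
have t1 : t <= 1 by rewrite /t ler_pdivrMr // mul1r; lra.
have td : t * (d + K) = d by rewrite /t mulfVK // gt_eqF.
have := h t; rewrite t0 t1 => /(_ isT) h1.
have h2 : d <= t * K.
  have : t * d <= t * (t * K) by rewrite /d; nra.
  by rewrite ler_pM2l.
have : d * (d + K) <= d * K.
  have -> : d * K = (t * K) * (d + K) by rewrite mulrAC td.
  by rewrite ler_pM2r.
nra.
Qed.
Section IP.
Context (R : realType) (V : completeNormedModType R) (ip : V -> V -> R)
  (H : is_inner_product ip).
Lemma ipC x y : ip x y = ip y x. Proof. by case: H. Qed.
Lemma ipL a x y z : ip (a *: x + y) z = a * ip x z + ip y z.
Proof. by case: H => _ []. Qed.
Lemma ipxx x : ip x x = `|x| ^+ 2. Proof. by case: H => _ []. Qed.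
Lemma ipDl x y z : ip (x + y) z = ip x z + ip y z.
Proof. by rewrite -[x in LHS]scale1r ipL mul1r. Qed.
Lemma ip0l z : ip 0 z = 0.
Proof. have := ipDl 0 0 z; rewrite addr0 => h. by apply: (addrI (ip 0 z)); rewrite -h addr0. Qed.
Lemma ipZl a x z : ip (a *: x) z = a * ip x z.
Proof. by rewrite -[a *: x]addr0 ipL ip0l addr0. Qed.
Lemma ipNl x z : ip (- x) z = - ip x z.
Proof. by rewrite -scaleN1r ipZl mulN1r. Qed.
Lemma ipDr x y z : ip z (x + y) = ip z x + ip z y.
Proof. by rewrite ipC ipDl !(ipC z). Qed.
Lemma ipZr a x z : ip z (a *: x) = a * ip z x.
Proof. by rewrite ipC ipZl ipC. Qed.
Lemma ipNr x z : ip z (- x) = - ip z x.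
Proof. by rewrite ipC ipNl ipC. Qed.
Lemma ipsym x y : ip x y = (ip x y + ip y x) / 2.
Proof. by rewrite (ipC y x); field. Qed.

Lemma prox_sub f gamma x p : proper_fun f -> convex_efun f -> 0 < gamma ->
  is_prox f gamma x p ->
  exists a : R, f p = a%:E /\ forall y, ((a + gamma^-1 * ip (x - p) (y - p))%:E <= f y)%E.
Proof.
move=> [[y0 hy0] nmo] cvx g0 hp.
have [a Ea] : exists a, f p = a%:E.
  case E: (f p) => [a| |]; first by exists a.
  - have := hp y0; rewrite E /= => h.
    have := le_lt_trans h (lte_add_pinfty hy0 (ltry _)); by rewrite ltxx.
  - have := nmo p; by rewrite E.
exists a; split => // y.
case Ey: (f y) => [b| |]; last by have := nmo y; rewrite Ey.
2: by rewrite leey.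
rewrite lee_fin.
set q := gamma^-1 * ip (x - p) (y - p).
suff : a <= b + - q by move=> h; lra.
apply: (@key _ a b _ ((2*gamma)^-1 * ip (y - p) (y - p))).
  rewrite ipxx; apply: mulr_ge0; last exact: sqr_ge0.
  by rewrite invr_ge0; lra.
move=> t /andP[t0 t1].
have hc := cvx y p t.
have hpt := hp (t *: y + (1 - t) *: p).
rewrite Ey Ea in hc hpt.
have : 0 <= t <= 1 by apply/andP; split; lra.
move=> /hc {}hc.
case Ept: (f (t *: y + (1 - t) *: p)) => [c| |]; rewrite Ept in hc hpt.
- rewrite -!EFinM -!EFinD !lee_fin in hc hpt.
  rewrite /q -!ipxx in hpt *.
  rewrite !(ipDl, ipDr, ipNl, ipNr, ipZl, ipZr) in hpt *.
  pose S := fun u v => (ip u v + ip v u) / 2.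
  have ES : forall u v, ip u v = S u v by move=> u v; rewrite /S -ipsym.
  rewrite !ES in hpt *; rewrite /S in hpt *.
  rewrite invfM in hpt *.
  nra.
- by move: hc; rewrite -!EFinM -EFinD leNgt ltry.
- by have := nmo (t *: y + (1 - t) *: p); rewrite Ept.
Qed.
End IP.
Theorem proposition4 (R : realType) (V : completeNormedModType R)
  (ip : V -> V -> R) (d1 d2 d3 : V -> \bar R) (gamma : R)
  (z w3 g3 w1 w2 g2 : nat -> V) (wstar : V) :
  is_inner_product ip ->
  proper_fun d1 -> closed_fun d1 -> convex_efun d1 ->
  proper_fun d2 -> closed_fun d2 -> convex_efun d2 ->
  proper_fun d3 -> closed_fun d3 -> convex_efun d3 ->
  0 < gamma ->
  (forall k, DY_step ip d1 d2 d3 gamma (z k) (w3 k) (g3 k) (w1 k) (w2 k) (z k.+1)) ->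
  (forall k, g2 k = gamma^-1 *: (w1 k + gamma *: g3 k - w2 k)) ->
  DY_fixed_point ip d1 d2 d3 gamma wstar ->
  forall k : nat,
    ((2 * gamma)%:E *
       (d1 (w1 k) + d2 (w3 k) + d3 (w3 k) - (d1 wstar + d2 wstar + d3 wstar))
     <= (`|z k - wstar| ^+ 2 - `|z k - z k.+1| ^+ 2 - `|z k.+1 - wstar| ^+ 2
         + 2 * gamma * ip (g3 k - g2 k) (z k - wstar)
         - 2 * gamma * ip (g3 k - g2 k) (z k - z k.+1)
         + 2 * gamma * ip (z k - z k.+1) (g2 k)
         + 2 * gamma ^+ 2 * ip (g3 k - g2 k) (g2 k))%:E)%E.
Proof.
move=> Hip p1 _ c1 p2 _ c2 p3 _ c3 g0 step eg2 _ k.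
case: (step k) => hp3 hg3 hp1 hp2 ez.
have [a3 [E3 h3]] := @prox_sub _ _ _ Hip _ _ _ _ p3 c3 g0 hp3.
have [a1 [E1 h1]] := @prox_sub _ _ _ Hip _ _ _ _ p1 c1 g0 hp1.
have [a2 E2] : exists a2, d2 (w3 k) = a2%:E.
  case: p2 => [[y0 hy0] nmo].
  case E: (d2 (w3 k)) => [a| |]; first by exists a.
  - have := hg3 y0; rewrite E /= => h.
    have := le_lt_trans h hy0; by rewrite ltxx.
  - have := nmo (w3 k); by rewrite E.
have h2 := hg3 wstar; rewrite E2 in h2.
have {}h1 := h1 wstar; have {}h3 := h3 wstar.
rewrite E1 E2 E3 -!EFinD.
have hS := leeD (leeD h1 h2) h3.
have g0' : (0 <= (2 * gamma)%:E)%E by rewrite lee_fin; lra.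
apply: le_trans (lee_wpmul2l g0' (leeB (lexx _) hS)) _.
rewrite -!EFinD -EFinM lee_fin.
rewrite le_eqVlt; apply/orP; left; apply/eqP.
rewrite ez eg2 -!(@ipxx _ _ _ Hip).
rewrite !(@ipDl _ _ _ Hip, @ipDr _ _ _ Hip, @ipNl _ _ _ Hip, @ipNr _ _ _ Hip, @ipZl _ _ _ Hip, @ipZr _ _ _ Hip).
pose S := fun u v => (ip u v + ip v u) / 2.
have ES : forall u v, ip u v = S u v by move=> u v; rewrite /S -(@ipsym _ _ _ Hip).
rewrite !ES /S.
field; lra.
Qed.
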